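(* Let $n\ge 2$ be even and let $m \ge \frac{5n}{2}-1$. Then the permutation $(1,n)(2n-1,2n)\in S_m$ is a product of $n$-crossing permutations over $S_m$.
   Context: For integers $2\le n\le m$ and $1 \le j \le m-n+1$, the $n$-crossing permutation $\pi_j\in S_m$ is $\pi_j=(j,\,j+n-1)(j+1,\,j+n-2)\cdots$, i.e. the involution sending $i \mapsto 2j+n-1-i$ for $j\le i\le j+n-1$ and fixing all other elements of $\{1,\dots,m\}$. The $n$-crossing permutations over $S_m$ are $\pi_1,\dots,\pi_{m-n+1}$. *)

(* Defs.v *)
From mathcomp Require Import all_boot all_order all_fingroup.
Set Implicit Arguments. Unset Strict Implicit. Unset Printing Implicit Defensive.

(* Convention: S_m is {perm 'I_m}; the point k of {1,...,m} is the ordinal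
   with value k-1 (0-indexed). *)

(* 0-indexed version of pi_{j+1}: for j <= i <= j+n-1, i |-> 2j+n-1-i;
   all other points fixed. *)
Definition crossing_fun (n j i : nat) : nat :=
  if (j <= i) && (i < j + n) then (2 * j + n - 1 - i)%N else i.

(* s is an n-crossing permutation over S_m: s = pi_{j+1} with
   1 <= j+1 <= m-n+1, i.e. j + n <= m. *)
Definition is_crossing (n m : nat) (s : {perm 'I_m}) : Prop :=
  exists j : nat, (j + n <= m)%N /\ forall i : 'I_m, val (s i) = crossing_fun n j i.

(* 0-indexed version of (1,n)(2n-1,2n). *)
Definition target_fun (n i : nat) : nat :=
  if i == 0 then (n - 1)%N
  else if i == (n - 1)%N then 0
  else if i == (2 * n - 2)%N then (2 * n - 1)%N
  else if i == (2 * n - 1)%N then (2 * n - 2)%N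
  else i.

(* Main.v *)
Require Import Defs.
From mathcomp Require Import all_boot all_order all_fingroup.
From mathcomp Require Import zify.

Lemma crossing_invol n j i : crossing_fun n j (crossing_fun n j i) = i.
Proof.
rewrite {2}/crossing_fun; case: ifP => [/andP[H1 H2]|H].
  rewrite /crossing_fun; case: ifP => [/andP[H3 H4]|/negbT]; first lia.
  by rewrite negb_and -!ltnNge => /orP; lia.
by rewrite /crossing_fun H.
Qed.

Lemma crossing_lt n m j i : (j + n <= m)%N -> (i < m)%N -> (crossing_fun n j i < m)%N.
Proof. rewrite /crossing_fun; case: ifP => [/andP[H1 H2]|H]; lia. Qed.

Section Cr.
Variables (n m j : nat).

Definition crf (i : 'I_m) : 'I_m :=
  if (j + n <= m)%N then insubd i (crossing_fun n j i) else i.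

Lemma crfK : involutive crf.
Proof.
move=> i; rewrite /crf; case: (boolP (j + n <= m)%N) => H //.
have L1 : (crossing_fun n j i < m)%N by apply: crossing_lt.
have E : nat_of_ord (insubd i (crossing_fun n j i)) = crossing_fun n j i.
  by rewrite -[LHS]/(val _) val_insubd L1.
apply: val_inj; rewrite val_insubd E crossing_invol.
by rewrite (ltn_ord i).
Qed.

Definition cr : {perm 'I_m} := perm (inv_inj crfK).

Lemma crE (i : 'I_m) : (j + n <= m)%N -> nat_of_ord (cr i) = crossing_fun n j i.
Proof.
move=> H; rewrite /cr permE /crf H -[LHS]/(val _) val_insubd.
by rewrite crossing_lt.
Qed.

Lemma cr_is : (j + n <= m)%N -> is_crossing n cr.
Proof. by move=> H; exists j; split => // i; exact: crE. Qed.
End Cr.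

Lemma cf_cases n j x :
  ((j <= x /\ x < j + n) /\ crossing_fun n j x + x + 1 = 2 * j + n) \/
  ((x < j \/ j + n <= x) /\ crossing_fun n j x = x).
Proof.
rewrite /crossing_fun; case: ifP => [/andP[Ha Hb]|/negbT].
  by left; split => //; lia.
by rewrite negb_and -!ltnNge => /orP Hc; right.
Qed.

Lemma tf_cases p x :
  (x = 0 /\ target_fun (p.+1 + p.+1) x = 2 * p + 1) \/
  (x = 2 * p + 1 /\ target_fun (p.+1 + p.+1) x = 0) \/
  (x = 4 * p + 2 /\ target_fun (p.+1 + p.+1) x = 4 * p + 3) \/
  (x = 4 * p + 3 /\ target_fun (p.+1 + p.+1) x = 4 * p + 2) \/
  (x <> 0 /\ x <> 2 * p + 1 /\ x <> 4 * p + 2 /\ x <> 4 * p + 3 /\ target_fun (p.+1 + p.+1) x = x).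
Proof.
rewrite /target_fun.
have -> : (p.+1 + p.+1 - 1 = 2 * p + 1)%N by lia.
have -> : (2 * (p.+1 + p.+1) - 2 = 4 * p + 2)%N by lia.
have -> : (2 * (p.+1 + p.+1) - 1 = 4 * p + 3)%N by lia.
case: eqP => [->|h0]; first by left.
case: eqP => [->|h1]; first by right; left.
case: eqP => [->|h2]; first by right; right; left.
case: eqP => [->|h3]; first by right; right; right; left.
by right; right; right; right.
Qed.

Ltac split_cf :=
  match goal with
  | |- context[crossing_fun ?n ?j ?x] =>
    lazymatch x with context[crossing_fun _ _ _] => fail | _ => idtac end;
    case: (cf_cases n j x) => [[[? ?]]|[?]];
    move: (crossing_fun n j x) => ? ?; try lia
  end.

Lemma key p x :
  let n := (p.+1 + p.+1)%N in let a := (3 * p + 2)%N in let b := (2 * p + 1)%N in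
  crossing_fun n b (crossing_fun n a (crossing_fun n 0 (crossing_fun n b (crossing_fun n 0
  (crossing_fun n b (crossing_fun n a (crossing_fun n 0 (crossing_fun n b (crossing_fun n 0 x))))))))) = target_fun n x.
Proof.
move=> n a b; rewrite /n /a /b.
case: (tf_cases p x) => [[? ->]|[[? ->]|[[? ->]|[[? ->]|[? [? [? [? ->]]]]]]]].
all: do 10 split_cf.
Qed.
Theorem lemma2p7 (n m : nat) (t : {perm 'I_m}) :
  (2 <= n)%N -> ~~ odd n -> (5 * n <= 2 * m + 2)%N ->
  (forall i : 'I_m, val (t i) = target_fun n i) ->
  exists ss : seq {perm 'I_m},
    (forall s, s \in ss -> is_crossing n s) /\ (\prod_(s <- ss) s)%g = t.
Proof.
move=> n2 nodd hm Ht.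
have [k nk] : exists k, n = k.*2.
  by exists n./2; rewrite -[LHS](odd_double_half n) (negbTE nodd).
have k1 : (1 <= k)%N by lia.
case: k nk k1 => [//|p] nk _.
have {}nk : n = (p.+1 + p.+1)%N by rewrite nk addnn.
subst n.
have h0 : (0 + (p.+1 + p.+1) <= m)%N by lia.
have h1 : ((2 * p + 1) + (p.+1 + p.+1) <= m)%N by lia.
have ha : ((3 * p + 2) + (p.+1 + p.+1) <= m)%N by lia.
pose n := (p.+1 + p.+1)%N.
pose a := cr n m 0; pose b := cr n m (2 * p + 1); pose c := cr n m (3 * p + 2).
exists [:: a; b; a; c; b; a; b; a; c; b]; split.
  move=> s; rewrite !inE => H.
  repeat case/orP: H => [/eqP->|H]; try exact: cr_is.
  by move/eqP: H => ->; exact: cr_is.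
apply/permP => i; apply: val_inj; rewrite /= Ht.
rewrite !big_cons big_nil mulg1 !permM /a /b /c !crE //.
exact: key.
Qed.
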